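(* Consider a downlink system in which a base station with $N$ antennas and power budget $p>0$ serves $K$ single-antenna users through an $M$-element reconfigurable intelligent surface (RIS). For beamforming vectors $\{\mathbf{w}\}=\{\mathbf{w}_k\in\mathbb{C}^{N\times1}\}_{k=1}^K$ and an RIS matrix $\mathbf{\Phi}\in\mathbb{C}^{M\times M}$, the SINR of user $k$ is \[ \gamma_k=\frac{|\mathbf{h}_k(\mathbf{\Phi})\mathbf{w}_k|^2}{\sigma^2+\sum_{i\neq k}|\mathbf{h}_k(\mathbf{\Phi})\mathbf{w}_i|^2},\qquad \mathbf{h}_k(\mathbf{\Phi})=\mathbf{f}_k\mathbf{\Phi}\mathbf{F}, \] and its rate is $r_k=f(\gamma_k)$ with $f(\gamma)=\ln(1+\gamma)-c\sqrt{\frac{2\gamma}{1+\gamma}}$ and $c=Q^{-1}(\epsilon)/\sqrt{n}$. Let the set of feasible pairs $(\{\mathbf{w}\},\mathbf{\Phi})$ be those with $\sum_k\|\mathbf{w}_k\|^2\le p$ and $\mathbf{\Phi}\in\mathcal{E}$ (where $\mathcal{E}$ is any one of the RIS feasible sets described in the context), and assume that $\gamma_k\geq\bar{\gamma}=\frac12(\sqrt{1+2c^2}-1)$ for all $k=1,\dots,K$. Let the SINR region be the set of all achievable SINR vectors $(\gamma_1,\dots,\gamma_K)$ and the rate region be the set of all achievable rate vectors $(r_1,\dots,r_K)$ over feasible pairs. Then every point on the boundary of the rate region corresponds (via $r_k=f(\gamma_k)$ for each $k$) to a point on the boundary of the SINR region, and vice versa.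
   Context: $\mathbf{F}\in\mathbb{C}^{M\times N}$ is the base-station-to-RIS channel matrix, $\mathbf{f}_k\in\mathbb{C}^{1\times M}$ the RIS-to-user-$k$ channel, $\sigma^2>0$ the noise power, $n$ the block length and $\epsilon\in(0,1)$ the maximum tolerable decoding error probability; $Q^{-1}$ is the inverse Gaussian $Q$-function. The transmit signal is $\mathbf{x}=\sum_k\mathbf{w}_ks_k$ with i.i.d. $s_k\sim\mathcal{CN}(0,1)$, so $\mathbb{E}\{\mathbf{x}\mathbf{x}^H\}=\sum_k\mathbf{w}_k\mathbf{w}_k^H$. The RIS feasible set $\mathcal{E}$ is one of: (i) locally passive diagonal: $\mathbf{\Phi}$ diagonal with $|\phi_{mm}|=1$ for all $m$; (ii) globally passive diagonal: $\mathbf{\Phi}$ diagonal with $\mathrm{Tr}\big(\mathbf{F}\mathbb{E}\{\mathbf{x}\mathbf{x}^H\}\mathbf{F}^H(\mathbf{\Phi}^H\mathbf{\Phi}-\mathbf{I}_M)\big)\le 0$; (iii) globally passive beyond diagonal: $\mathbf{\Phi}=\mathbf{\Phi}^T$ with $\mathrm{Tr}\big(\mathbf{F}\mathbb{E}\{\mathbf{x}\mathbf{x}^H\}\mathbf{F}^H(\mathbf{\Phi}^H\mathbf{\Phi}-\mathbf{I}_M)\big)\le 0$. A point of a region in $\mathbb{R}^K$ is on its boundary if no other point of the region is componentwise at least as large with at least one component strictly larger. *)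

(* Defs.v *)
From HB Require Import structures.
From mathcomp Require Import all_boot all_order all_algebra.
From mathcomp Require Import all_classical all_reals all_analysis.
From mathcomp Require Import complex.
Set Implicit Arguments. Unset Strict Implicit. Unset Printing Implicit Defensive.
Import Order.TTheory GRing.Theory Num.Theory.
Local Open Scope ring_scope.
Local Open Scope classical_set_scope.

Definition Qfun (R : realType) (x : R) : R :=
  (Num.sqrt (pi *+ 2))^-1 *
  Rintegral (@lebesgue_measure R) `[x, +oo[ (fun t : R => expR (- (t ^+ 2) / 2)).

(* inverse Gaussian Q-function (Q is a bijection R -> (0,1)) *)
Definition Qinv (R : realType) (eps : R) : R := xget 0 [set x | Qfun x = eps].

Definition cconst (R : realType) (eps : R) (n : nat) : R :=
  Qinv eps / Num.sqrt n%:R.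

Definition ratef (R : realType) (c g : R) : R :=
  ln (1 + g) - c * Num.sqrt (g *+ 2 / (1 + g)).

Definition gbar (R : realType) (c : R) : R :=
  (Num.sqrt (1 + (c ^+ 2) *+ 2) - 1) / 2.

Section Model.
Variables (R : realType) (N M K : nat).
Local Notation C := R[i].

Definition conjT (m n : nat) (A : 'M[C]_(m, n)) : 'M[C]_(n, m) :=
  map_mx (fun z : C => conjc z) A^T.

Definition sqmod (z : C) : R := ComplexField.Normc.normc z ^+ 2.

Definition sqnormv (v : 'cV[C]_N) : R := \sum_(j < N) sqmod (v j 0).

Definition hw (F : 'M[C]_(M, N)) (fk : 'I_K -> 'rV[C]_M) (Phi : 'M[C]_M)
  (w : 'I_K -> 'cV[C]_N) (k i : 'I_K) : C :=
  (fk k *m Phi *m F *m w i) 0 0.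

Definition sinr (F : 'M[C]_(M, N)) (fk : 'I_K -> 'rV[C]_M) (sigma2 : R)
  (w : 'I_K -> 'cV[C]_N) (Phi : 'M[C]_M) (k : 'I_K) : R :=
  sqmod (hw F fk Phi w k k) /
  (sigma2 + \sum_(i < K | i != k) sqmod (hw F fk Phi w k i)).

Definition txcov (w : 'I_K -> 'cV[C]_N) : 'M[C]_N :=
  \sum_(k < K) (w k *m conjT (w k)).

(* global passivity: Tr(F E{xx^H} F^H (Phi^H Phi - I)) <= 0, using the
   order of the numeric field C (z <= 0 iff z is real and nonpositive) *)
Definition global_passive (F : 'M[C]_(M, N)) (w : 'I_K -> 'cV[C]_N)
  (Phi : 'M[C]_M) : Prop :=
  \tr (F *m txcov w *m conjT F *m (conjT Phi *m Phi - 1%:M)) <= 0.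

Inductive RISmodel := LocalDiag | GlobalDiag | GlobalBD.

Definition RISfeasible (m : RISmodel) (F : 'M[C]_(M, N))
  (w : 'I_K -> 'cV[C]_N) (Phi : 'M[C]_M) : Prop :=
  match m with
  | LocalDiag => is_diag_mx Phi /\ (forall j : 'I_M, `|Phi j j| = 1)
  | GlobalDiag => is_diag_mx Phi /\ global_passive F w Phi
  | GlobalBD => Phi = Phi^T /\ global_passive F w Phi
  end.

Definition feasible (m : RISmodel) (F : 'M[C]_(M, N)) (fk : 'I_K -> 'rV[C]_M)
  (sigma2 p c : R) (w : 'I_K -> 'cV[C]_N) (Phi : 'M[C]_M) : Prop :=
  \sum_(k < K) sqnormv (w k) <= p /\ RISfeasible m F w Phi /\
  (forall k, gbar c <= sinr F fk sigma2 w Phi k).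

Definition sinr_region m F fk sigma2 p c : set ('I_K -> R) :=
  [set g | exists w Phi, feasible m F fk sigma2 p c w Phi /\
                         g = sinr F fk sigma2 w Phi].

Definition rate_region m F fk sigma2 p c : set ('I_K -> R) :=
  [set r | exists w Phi, feasible m F fk sigma2 p c w Phi /\
                         r = (fun k => ratef c (sinr F fk sigma2 w Phi k))].

End Model.

(* Pareto boundary of a region in R^K *)
Definition on_boundary (R : realType) (K : nat) (S : set ('I_K -> R))
  (x : 'I_K -> R) : Prop :=
  S x /\ ~ (exists y, S y /\ (forall k, x k <= y k) /\ (exists k, x k < y k)).

(* Main.v *)
Require Import Defs.
From HB Require Import structures.
From mathcomp Require Import all_boot all_order all_algebra.
From mathcomp Require Import all_classical all_reals all_analysis.
From mathcomp Require Import complex.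
From mathcomp Require Import ring lra.
Import Order.TTheory GRing.Theory Num.Theory.
Local Open Scope ring_scope.

Lemma gbar_sq (R : realType) (c a : R) : gbar c <= a -> 0 <= a /\ c ^+ 2 <= 2 * a * (1 + a).
Proof.
rewrite /gbar => ha.
set s := Num.sqrt _ in ha.
have s0 : 0 <= s by apply: sqrtr_ge0.
have ss : s ^+ 2 = 1 + (c ^+ 2) *+ 2 by rewrite sqr_sqrtr // addr_ge0 // mulrn_wge0 // sqr_ge0.
have s1 : 1 <= s.
  have : 1 <= s ^+ 2 by rewrite ss lerDl mulrn_wge0 // sqr_ge0.
  nra.
rewrite mulr2n in ss.
have h2 : s <= 2 * a + 1 by lra.
split; first lra.
nra.
Qed.

Lemma ratef_mono (R : realType) (c a b : R) :
  gbar c <= a -> a < b -> ratef c a < ratef c b.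
Proof.
move=> /gbar_sq [a0 hc] ab.
rewrite /ratef.
have a1 : 0 < 1 + a by lra.
have b1 : 0 < 1 + b by lra.
set ua := a *+ 2 / (1 + a).
set ub := b *+ 2 / (1 + b).
have hua : ua * (1 + a) = 2 * a.
  by rewrite /ua mulfVK ?mulr2n; [lra| apply: lt0r_neq0].
have hub : ub * (1 + b) = 2 * b.
  by rewrite /ub mulfVK ?mulr2n; [lra| apply: lt0r_neq0].
have ua0 : 0 <= ua by rewrite /ua divr_ge0 // ?mulrn_wge0 //; lra.
have ub0 : 0 < ub by rewrite /ub divr_gt0 // ?mulrn_wgt0 //; lra.
have uab : ua < ub.
  rewrite /ua /ub ltr_pdivrMr // mulrAC ltr_pdivlMr // !mulr2n; nra.
set sa := Num.sqrt ua; set sb := Num.sqrt ub.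
have sa0 : 0 <= sa by apply: sqrtr_ge0.
have sab : sa < sb by rewrite ltr_sqrt.
have saa : sa ^+ 2 = ua by rewrite sqr_sqrtr.
have sbb : sb ^+ 2 = ub by rewrite sqr_sqrtr // ltW.
have hln : (b - a) / (1 + b) <= ln (1 + b) - ln (1 + a).
  have w0 : (1 + a) / (1 + b) \in Num.pos by rewrite posrE divr_gt0.
  have := expR_ge1Dx (ln ((1 + a) / (1 + b))).
  rewrite lnK // ln_div ?posrE //.
  have -> : (1 + a) / (1 + b) = 1 - (b - a) / (1 + b).
    by field; apply: lt0r_neq0.
  lra.
have ht : 2 * c < (1 + a) * (sa + sb).
  have t2 : ((1 + a) * sa) ^+ 2 = 2 * a * (1 + a).
    by rewrite exprMn saa -hua; ring.
  have t0 : 0 <= (1 + a) * sa by rewrite mulr_ge0 //; lra.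
  have : c <= (1 + a) * sa by nra.
  nra.
set q := (b - a) / (1 + b).
have hq : q * (1 + b) = b - a by rewrite /q mulfVK //; apply: lt0r_neq0.
have hln2 : q <= ln (1 + b) - ln (1 + a) by []. clearbody q. suff : c * (sb - sa) < q by lra.
set P := (1 + a) * (1 + b) * (sa + sb).
have P0 : 0 < P by rewrite /P !mulr_gt0 //; lra.
rewrite -(ltr_pM2r P0).
have e1 : c * (sb - sa) * P = 2 * c * (b - a).
  have : (sb - sa) * (sa + sb) = ub - ua by rewrite -sbb -saa; ring.
  rewrite /P => h.
  have -> : c * (sb - sa) * ((1 + a) * (1 + b) * (sa + sb)) = c * ((sb - sa) * (sa + sb)) * (1 + a) * (1 + b) by ring.
  rewrite h.
  have -> : c * (ub - ua) * (1 + a) * (1 + b) = c * (ub * (1 + b) * (1 + a) - ua * (1 + a) * (1 + b)) by ring.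
  rewrite hub hua; ring.
have e2 : q * P = (b - a) * ((1 + a) * (sa + sb)).
  rewrite /P -hq; ring.
rewrite e1 e2.
have ba : 0 < b - a by lra.
nra.
Qed.


Lemma ratef_le (R : realType) (c a b : R) :
  gbar c <= a -> gbar c <= b -> (ratef c a <= ratef c b) = (a <= b).
Proof.
move=> ha hb; apply/idP/idP => h.
  by rewrite leNgt; apply/negP => /(@ratef_mono _ c b a hb); rewrite ltNge h.
case: (ltgtP a b) h => // [h' _ | -> _]; first exact/ltW/ratef_mono.
exact: lexx.
Qed.

Lemma ratef_lt (R : realType) (c a b : R) :
  gbar c <= a -> gbar c <= b -> (ratef c a < ratef c b) = (a < b).
Proof. by move=> ha hb; rewrite !ltNge ratef_le. Qed.

Theorem lemma2 (R : realType) (N M K : nat) (m : RISmodel)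
  (F : 'M[R[i]]_(M, N)) (fk : 'I_K -> 'rV[R[i]]_M)
  (sigma2 p eps : R) (n : nat)
  (hsigma : 0 < sigma2) (hp : 0 < p) (heps0 : 0 < eps) (heps1 : eps < 1)
  (hn : (0 < n)%N) :
  let c := cconst eps n in
  (forall r, on_boundary (rate_region m F fk sigma2 p c) r ->
     exists g, on_boundary (sinr_region m F fk sigma2 p c) g /\
               forall k, r k = ratef c (g k)) /\
  (forall g, on_boundary (sinr_region m F fk sigma2 p c) g ->
     on_boundary (rate_region m F fk sigma2 p c) (fun k => ratef c (g k))).
Proof.
move=> c; split.
- move=> r [[w [Phi [fe ->]]] nd].
  exists (sinr F fk sigma2 w Phi); split; last by [].
  split; first by exists w, Phi.
  move=> [y [[w' [Phi' [fe' ->]]] [hle [k hk]]]].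
  apply: nd; exists (fun k => ratef c (sinr F fk sigma2 w' Phi' k)).
  have g1 := fe.2.2; have g2 := fe'.2.2.
  split; first by exists w', Phi'.
  split; first by move=> j; rewrite ratef_le.
  by exists k; rewrite ratef_lt.
- move=> g [[w [Phi [fe Eg]]] nd].
  have g1 : forall k, gbar c <= g k by move=> k; rewrite Eg; exact: fe.2.2.
  split; first by exists w, Phi; split => //; rewrite Eg.
  move=> [y [[w' [Phi' [fe' ->]]] [hle [k hk]]]].
  have g2 := fe'.2.2.
  apply: nd; exists (sinr F fk sigma2 w' Phi').
  split; first by exists w', Phi'.
  split; first by move=> j; have := hle j; rewrite ratef_le.
  by exists k; move: hk; rewrite ratef_lt.
Qed.
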